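(* Let $a\in\mathbb{C}$, let $v=\{v_n\}_{n=1}^\infty\in\ell^1(\mathbb{N})$ be a complex sequence and $V=\mathrm{diag}(v_1,v_2,\dots)$. Then \[ \sigma_{\mathrm p}(J_a+V)\subset\{\pm2\}\cup\Big\{z\in\mathbb{C}\setminus[-2,2]\ \Big|\ \sqrt{|z^2-4|}\le g_a(z)\,\|v\|_{\ell^1}\Big\}. \]
   Context: $\mathbb{N}=\{1,2,\dots\}$. For $a\in\mathbb{C}$, $J_a$ is the operator on $\ell^2(\mathbb{N})$ with $(J_a\psi)_1=a\psi_1+\psi_2$ and $(J_a\psi)_n=\psi_{n-1}+\psi_{n+1}$ for $n\ge2$. Every $z\in\mathbb{C}\setminus[-2,2]$ can be written uniquely as $z=k+k^{-1}$ with $0<|k|<1$, and for such $z$ one defines \[ g_a(z):=\sup_{n\in\mathbb{N}}\Big|1-\frac{k-a}{1-ak}\,k^{2n-1}\Big|, \] with the convention $g_a(a+a^{-1})=+\infty$ when $|a|>1$ (where $1-ak=0$). $\sigma_{\mathrm p}$ denotes the set of eigenvalues. *)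

(* Defs.v *)
From Stdlib Require Import Reals ClassicalEpsilon.
From Coquelicot Require Import Coquelicot.
Open Scope R_scope.

(* Sequences are indexed from 0: psi i stands for psi_{i+1}. *)

Definition JaV (a : C) (v psi : nat -> C) (i : nat) : C :=
  match i with
  | O => Cplus (Cmult (Cplus a (v O)) (psi O)) (psi 1%nat)
  | S j => Cplus (Cplus (psi j) (Cmult (v i) (psi i))) (psi (S i))
  end.

Definition in_l2 (psi : nat -> C) : Prop := ex_series (fun n => (Cmod (psi n)) ^ 2).
Definition in_l1 (v : nat -> C) : Prop := ex_series (fun n => Cmod (v n)).
Definition l1_norm (v : nat -> C) : R := Series (fun n => Cmod (v n)).

Definition is_eigenvalue (a : C) (v : nat -> C) (z : C) : Prop :=
  exists psi : nat -> C, in_l2 psi /\ (exists n, psi n <> RtoC 0) /\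
    forall i, JaV a v psi i = Cmult z (psi i).

Definition in_segment (z : C) : Prop := snd z = 0 /\ -2 <= fst z <= 2.

Definition is_k_of (z k : C) : Prop :=
  0 < Cmod k < 1 /\ z = Cplus k (Cinv k).

(* g_a(z) as an extended real; +oo in the convention case 1 - a k = 0.
   The sup is over n >= 1, i.e. exponent 2n-1 = 2m+1 for m : nat. *)
Definition g (a z : C) : Rbar :=
  if excluded_middle_informative
       (exists k, is_k_of z k /\ Cminus (RtoC 1) (Cmult a k) = RtoC 0)
  then p_infty
  else Lub_Rbar (fun r => exists k (m : nat), is_k_of z k /\
         r = Cmod (Cminus (RtoC 1)
                   (Cmult (Cdiv (Cminus k a) (Cminus (RtoC 1) (Cmult a k)))
                          (pow_n k (2 * m + 1))))).

Definition bound_holds (a z : C) (nv : R) : Prop :=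
  match g a z with
  | p_infty => True
  | Finite r => sqrt (Cmod (Cminus (Cmult z z) (RtoC 4))) <= r * nv
  | m_infty => False
  end.

(* Main.v *)
Require Import Defs.
From Stdlib Require Import Reals Lra Lia Psatz Arith Classical ClassicalEpsilon.
From Coquelicot Require Import Coquelicot.
Open Scope R_scope.


Fixpoint rsum (f : nat -> R) (n : nat) : R :=
  match n with O => 0 | S m => rsum f m + f m end.
Fixpoint csum (f : nat -> C) (n : nat) : C :=
  match n with O => RtoC 0 | S m => Cplus (csum f m) (f m) end.

Lemma csum_triangle f n : Cmod (csum f n) <= rsum (fun i => Cmod (f i)) n.
Proof.
  induction n; simpl. rewrite Cmod_0; lra.
  eapply Rle_trans. apply Cmod_triangle. lra.
Qed.

Lemma rsum_le f g n : (forall i, f i <= g i) -> rsum f n <= rsum g n.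
Proof. intros H; induction n; simpl; [lra| specialize (H n); lra]. Qed.

Lemma rsum_nonneg f n : (forall i, 0 <= f i) -> 0 <= rsum f n.
Proof. intros H; induction n; simpl; [lra| specialize (H n); lra]. Qed.

Lemma rsum_scal c f n : rsum (fun i => c * f i) n = c * rsum f n.
Proof. induction n; simpl; [ring| rewrite IHn; ring]. Qed.

Lemma rsum_split f n d : rsum f n + rsum (fun i => f (n + i)%nat) d = rsum f (n + d).
Proof.
  induction d. simpl. rewrite Nat.add_0_r; ring.
  replace (n + S d)%nat with (S (n + d)) by lia. simpl. rewrite <- IHd. ring.
Qed.

Lemma rsum_sum_n f n : rsum f (S n) = sum_n f n.
Proof.
  induction n. simpl. rewrite sum_O. ring.
  rewrite sum_Sn. change (rsum f (S (S n))) with (rsum f (S n) + f (S n)).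
  rewrite IHn. reflexivity.
Qed.

Lemma sum_n_mono f n d : (forall i, 0 <= f i) -> sum_n f n <= sum_n f (d + n).
Proof.
  intros H. rewrite <- !rsum_sum_n.
  replace (S (d + n)) with (S n + d)%nat by lia.
  rewrite <- rsum_split. pose proof (rsum_nonneg (fun i => f (S n + i)%nat) d (fun i => H _)). lra.
Qed.

Lemma rsum_le_series f n : (forall i, 0 <= f i) -> ex_series f -> rsum f n <= Series f.
Proof.
  intros H [l Hl]. rewrite (is_series_unique _ _ Hl).
  destruct n. simpl. 
  - assert (0 <= l). { 
      assert (Hc := is_lim_seq_le (fun _ => sum_n f 0) (fun m => sum_n f (m + 0)) _ _
        (fun m => sum_n_mono f 0 m H) (is_lim_seq_const _)
        (proj1 (is_lim_seq_incr_n (sum_n f) 0 l) Hl)). simpl in Hc. rewrite sum_O in Hc. specialize (H 0%nat). lra. }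
    lra.
  - rewrite rsum_sum_n.
    assert (Hc := is_lim_seq_le (fun _ => sum_n f n) (fun m => sum_n f (m + n)) _ _
        (fun m => sum_n_mono f n m H) (is_lim_seq_const _)
        (proj1 (is_lim_seq_incr_n (sum_n f) n l) Hl)). simpl in Hc. exact Hc.
Qed.


Lemma l2_to_0 psi : in_l2 psi -> forall eps, 0 < eps ->
  exists N, forall n, (N <= n)%nat -> Cmod (psi n) ^ 2 < eps.
Proof.
  intros H eps He. apply ex_series_lim_0 in H.
  apply is_lim_seq_spec in H. destruct (H (mkposreal eps He)) as [N HN].
  exists N. intros n Hn. specialize (HN n Hn). simpl in HN.
  rewrite Rminus_0_r in HN. apply Rabs_def2 in HN. lra.
Qed.

Lemma tail_small (a : nat -> R) : ex_series a -> forall d, 0 < d ->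
  exists N0, forall N m, (N0 < N)%nat -> rsum (fun i => a (N + i)%nat) m <= d.
Proof.
  intros [l Hl] d Hd.
  assert (Hl' : is_lim_seq (sum_n a) l) by exact Hl.
  apply is_lim_seq_spec in Hl'. destruct (Hl' (mkposreal (d/2) ltac:(lra))) as [N0 HN].
  exists N0. intros N m HN0. destruct N as [|p]; [lia|].
  pose proof (rsum_split a (S p) m) as Hs.
  replace (S p + m)%nat with (S (p + m)) in Hs by lia.
  rewrite !rsum_sum_n in Hs.
  pose proof (HN p ltac:(lia)) as H1. pose proof (HN (p + m)%nat ltac:(lia)) as H2.
  simpl in H1, H2. apply Rabs_def2 in H1. apply Rabs_def2 in H2. lra.
Qed.

Lemma argmax_fin (f : nat -> R) (M : nat) : exists j, (j <= M)%nat /\ forall i, (i <= M)%nat -> f i <= f j.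
Proof.
  induction M.
  - exists 0%nat. split; [lia|]. intros i Hi. replace i with 0%nat by lia. lra.
  - destruct IHM as [j [Hj H]]. destruct (Rle_dec (f (S M)) (f j)).
    + exists j. split; [lia|]. intros i Hi. destruct (Nat.eq_dec i (S M)); [subst; lra| apply H; lia].
    + exists (S M). split; [lia|]. intros i Hi. destruct (Nat.eq_dec i (S M)); [subst; lra|].
      specialize (H i ltac:(lia)). lra.
Qed.

Lemma argmax_vanish (f : nat -> R) n0 : 0 < f n0 ->
  (exists N, forall n, (N <= n)%nat -> f n < f n0) ->
  exists j, forall i, f i <= f j.
Proof.
  intros Hp [N HN]. destruct (argmax_fin f (Nat.max N n0)) as [j [Hj H]].
  exists j. intros i. destruct (le_lt_dec i (Nat.max N n0)). apply H; auto.
  specialize (HN i ltac:(lia)). specialize (H n0 ltac:(lia)). lra.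
Qed.

Lemma Cmod_pow_n (k : C) n : Cmod (pow_n k n) = Cmod k ^ n.
Proof.
  induction n; simpl. apply Cmod_1. change (mult k (pow_n k n)) with (Cmult k (pow_n k n)).
  rewrite Cmod_mult, IHn. reflexivity.
Qed.

Lemma pow_n_mul (x y : C) n : pow_n (Cmult x y) n = Cmult (pow_n x n) (pow_n y n).
Proof.
  induction n; simpl. change (one : C) with (RtoC 1). field.
  change (mult (Cmult x y) (pow_n (Cmult x y) n) = Cmult (mult x (pow_n x n)) (mult y (pow_n y n))).
  unfold mult; simpl. rewrite IHn. change (@Ring.mult C_Ring) with Cmult. ring.
Qed.


Lemma rec_eq a v z psi : (forall i, JaV a v psi i = Cmult z (psi i)) ->
  forall j, psi (S (S j)) = Cminus (Cminus (Cmult z (psi (S j))) (Cmult (v (S j)) (psi (S j)))) (psi j).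
Proof.
  intros H j. specialize (H (S j)). simpl in H. rewrite <- H. ring.
Qed.

Lemma rec_zero v z psi :
  (forall j, psi (S (S j)) = Cminus (Cminus (Cmult z (psi (S j))) (Cmult (v (S j)) (psi (S j)))) (psi j)) ->
  forall M, psi M = RtoC 0 -> psi (S M) = RtoC 0 -> forall n, psi n = RtoC 0.
Proof.
  intros R M H0 H1.
  assert (F : forall d, psi (M + d)%nat = RtoC 0 /\ psi (S (M + d)) = RtoC 0).
  { induction d. rewrite Nat.add_0_r; auto.
    destruct IHd as [A B]. replace (M + S d)%nat with (S (M + d)) by lia. split; auto.
    rewrite R, A, B. ring. }
  assert (Bk : forall d, (d <= M)%nat -> psi (M - d)%nat = RtoC 0 /\ psi (S (M - d)) = RtoC 0).
  { induction d; intros Hd. rewrite Nat.sub_0_r; auto.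
    destruct (IHd ltac:(lia)) as [A B].
    replace (S (M - S d)) with (M - d)%nat by lia. split; auto.
    pose proof (R (M - S d)%nat) as E.
    assert (Hj : S (M - S d) = (M - d)%nat) by lia. rewrite Hj, A, B in E.
    transitivity (Cminus (Cminus (Cminus (Cmult z (RtoC 0)) (Cmult (v (M-d)%nat) (RtoC 0))) (RtoC 0))
       (Cminus (Cminus (Cmult z (RtoC 0)) (Cmult (v (M-d)%nat) (RtoC 0))) (psi (M - S d)%nat))). ring.
    rewrite <- E. ring. }
  intros n. destruct (le_lt_dec M n).
  - replace n with (M + (n - M))%nat by lia. apply F.
  - replace n with (M - (M - n))%nat by lia. apply Bk. lia.
Qed.


Definition nsq (x : C) : R := fst x ^ 2 + snd x ^ 2.
Definition dotc (x y : C) : R := fst x * fst y + snd x * snd y.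
Definition Qf (t : R) (x y : C) : R := nsq x + nsq y - t * dotc x y.

Lemma nsq_ge0 x : 0 <= nsq x.
Proof. unfold nsq; nra. Qed.

Lemma nsq_Cmod x : nsq x = Cmod x ^ 2.
Proof. rewrite Cmod2_alt. reflexivity. Qed.

Lemma nsq_zero x : nsq x = 0 -> x = RtoC 0.
Proof. destruct x as [p q]; unfold nsq; simpl; intros H.
  assert (p = 0) by nra. assert (q = 0) by nra. subst. reflexivity. Qed.

Lemma Qpos t x y : Rabs t <= 2 -> (1 - Rabs t / 2) * (nsq x + nsq y) <= Qf t x y.
Proof.
  destruct x as [x1 x2], y as [y1 y2]; unfold Qf, nsq, dotc; simpl.
  intros H. destruct (Rle_dec 0 t).
  - rewrite Rabs_pos_eq in * by lra.
    assert (0 <= t * ((x1-y1)^2 + (x2-y2)^2)) by (apply Rmult_le_pos; [lra | repeat apply Rplus_le_le_0_compat; apply pow2_ge_0]). lra.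
  - rewrite Rabs_left in * by lra.
    assert (0 <= (-t) * ((x1+y1)^2 + (x2+y2)^2)) by (apply Rmult_le_pos; [lra | repeat apply Rplus_le_le_0_compat; apply pow2_ge_0]). lra.
Qed.

Lemma Qupper t x y : Rabs t <= 2 -> Qf t x y <= 2 * (nsq x + nsq y).
Proof.
  destruct x as [x1 x2], y as [y1 y2]; unfold Qf, nsq, dotc; simpl.
  intros H. destruct (Rle_dec 0 t).
  - rewrite Rabs_pos_eq in * by lra.
    assert (0 <= t * ((x1+y1)^2 + (x2+y2)^2)) by (apply Rmult_le_pos; [lra | repeat apply Rplus_le_le_0_compat; apply pow2_ge_0]).
    assert (0 <= (2 - t) * (x1^2+x2^2+y1^2+y2^2)) by (apply Rmult_le_pos; [lra | repeat apply Rplus_le_le_0_compat; apply pow2_ge_0]). lra.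
  - rewrite Rabs_left in * by lra.
    assert (0 <= (-t) * ((x1-y1)^2 + (x2-y2)^2)) by (apply Rmult_le_pos; [lra | repeat apply Rplus_le_le_0_compat; apply pow2_ge_0]).
    assert (0 <= (2 + t) * (x1^2+x2^2+y1^2+y2^2)) by (apply Rmult_le_pos; [lra | repeat apply Rplus_le_le_0_compat; apply pow2_ge_0]). lra.
Qed.

Lemma Qstep t x y : Qf t (Cminus (Cmult (RtoC t) y) x) y = Qf t y x.
Proof. destruct x as [x1 x2], y as [y1 y2]; unfold Qf, nsq, dotc; simpl. ring. Qed.

Lemma CS s a b c : 0 <= s -> nsq b <= s ^ 2 * nsq c -> 2 * Rabs (dotc a b) <= s * (nsq a + nsq c).
Proof.
  intros Hs Hb. destruct (Req_dec s 0) as [E|E].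
  - subst. assert (nsq b = 0) by (pose proof (nsq_ge0 b); replace (0^2 * nsq c) with 0 in Hb by ring; lra).
    apply nsq_zero in H. subst. unfold dotc; simpl. rewrite !Rmult_0_r, Rplus_0_r, Rabs_R0. lra.
  - assert (0 < s) by lra.
    apply Rmult_le_reg_l with s; auto.
    destruct a as [a1 a2], b as [b1 b2]; unfold nsq, dotc in *; simpl in *.
    pose proof (nsq_ge0 c).
    destruct (Rle_dec 0 (a1 * b1 + a2 * b2)).
    + rewrite Rabs_pos_eq by lra.
      assert (0 <= (s*a1 - b1)^2 + (s*a2-b2)^2) by (apply Rplus_le_le_0_compat; apply pow2_ge_0). lra.
    + rewrite Rabs_left by lra.
      assert (0 <= (s*a1 + b1)^2 + (s*a2+b2)^2) by (apply Rplus_le_le_0_compat; apply pow2_ge_0). lra.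
Qed.

Lemma Qpert t s x h y : Rabs t <= 2 -> 0 <= s -> nsq h <= s ^ 2 * nsq y ->
  Qf t x y - 3 * s * (nsq x + nsq y) <= Qf t (Cminus x h) y.
Proof.
  intros Ht Hs Hh.
  pose proof (CS s x h y Hs Hh) as C1.
  pose proof (CS s y h y Hs Hh) as C2.
  assert (E : Qf t (Cminus x h) y = Qf t x y - 2 * dotc x h + nsq h + t * dotc y h).
  { destruct x as [x1 x2], y as [y1 y2], h as [h1 h2]; unfold Qf, nsq, dotc; simpl. ring. }
  rewrite E.
  pose proof (Rle_abs (dotc x h)). pose proof (nsq_ge0 h). pose proof (nsq_ge0 x). pose proof (nsq_ge0 y).
  assert (t * dotc y h >= - (2 * Rabs (dotc y h))).
  { pose proof (Rabs_pos (dotc y h)).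
    assert (Rabs (t * dotc y h) <= 2 * Rabs (dotc y h)) by (rewrite Rabs_mult; nra).
    pose proof (Rle_abs (- (t * dotc y h))) as HH. rewrite Rabs_Ropp in HH. lra. }
  nra.
Qed.

Lemma nsq_mult x y : nsq (Cmult x y) = nsq x * nsq y.
Proof. destruct x, y; unfold nsq; simpl; ring. Qed.


Lemma interior_no_eig a v z : in_l1 v -> snd z = 0 -> -2 < fst z < 2 ->
  is_eigenvalue a v z -> False.
Proof.
  intros hv Hs Hf [psi [Hl2 [[n0 Hn0] Heq]]].
  set (t := fst z) in *.
  assert (Hz : z = RtoC t) by (destruct z; unfold RtoC, t; simpl in *; subst; reflexivity).
  pose proof (rec_eq a v z psi Heq) as R.
  assert (Ht : Rabs t <= 2) by (apply Rabs_le; lra).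
  set (c0 := 1 - Rabs t / 2).
  assert (Hc0 : 0 < c0) by (unfold c0; assert (Rabs t < 2) by (apply Rabs_def1; lra); lra).
  set (C := 3 / c0).
  assert (HC : 0 < C) by (unfold C; apply Rdiv_lt_0_compat; lra).
  set (Q := fun j => Qf t (psi (S j)) (psi j)).
  assert (Step : forall j, (1 - C * Cmod (v (S j))) * Q j <= Q (S j)).
  { intros j. unfold Q.
    set (x0 := Cminus (Cmult (RtoC t) (psi (S j))) (psi j)).
    set (h := Cmult (v (S j)) (psi (S j))).
    replace (psi (S (S j))) with (Cminus x0 h) by (rewrite R, Hz; unfold x0, h; ring).
    set (s := Cmod (v (S j))).
    assert (Hs0 : 0 <= s) by apply Cmod_ge_0.
    assert (Hh : nsq h <= s ^ 2 * nsq (psi (S j))).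
    { unfold h, s. rewrite nsq_mult, nsq_Cmod. lra. }
    pose proof (Qpert t s x0 h (psi (S j)) Ht Hs0 Hh) as P.
    pose proof (Qpos t x0 (psi (S j)) Ht) as P2.
    unfold x0 in P, P2. rewrite Qstep in P, P2. fold x0 in P, P2. fold c0 in P2.
    set (N := nsq x0 + nsq (psi (S j))) in *.
    set (Qj := Qf t (psi (S j)) (psi j)) in *.
    assert (E : C * s * Qj = 3 * s * N + (3 * s / c0) * (Qj - c0 * N)) by (unfold C; field; repeat split; intro; lra).
    assert (0 <= (3 * s / c0) * (Qj - c0 * N)).
    { apply Rmult_le_pos. apply Rdiv_le_0_compat; lra. lra. }
    lra. }
  assert (Hv' : ex_series (fun n => Cmod (v n))) by exact hv.
  destruct (tail_small _ Hv' (1 / (2 * C)) ltac:(apply Rdiv_lt_0_compat; lra)) as [M HM].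
  assert (QM0 : 0 <= Q M).
  { pose proof (Qpos t (psi (S M)) (psi M) Ht). pose proof (nsq_ge0 (psi (S M))).
    pose proof (nsq_ge0 (psi M)). unfold Q. fold c0 in H. nra. }
  assert (HT : forall d, C * rsum (fun i => Cmod (v (S M + i)%nat)) d <= 1/2).
  { intros d. pose proof (HM (S M) d ltac:(lia)) as H0.
    assert (E : C * (1 / (2 * C)) = 1/2) by (field; lra).
    apply (Rmult_le_compat_l C) in H0; lra. }
  assert (Ind : forall d, Q M * (1 - C * rsum (fun i => Cmod (v (S M + i)%nat)) d) <= Q (M + d)%nat).
  { induction d.
    - simpl. rewrite Nat.add_0_r. lra.
    - replace (M + S d)%nat with (S (M + d)) by lia.
      pose proof (Step (M + d)%nat) as St.
      set (Sd := rsum (fun i => Cmod (v (S M + i)%nat)) d) in *.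
      set (x := Cmod (v (S M + d)%nat)).
      change (Cmod (v (S (M + d)))) with x in St.
      pose proof (HT (S d)) as Ht1.
      change (rsum (fun i => Cmod (v (S M + i)%nat)) (S d)) with (Sd + x) in Ht1 |- *.
      assert (0 <= Sd) by (apply rsum_nonneg; intros; apply Cmod_ge_0).
      assert (0 <= x) by apply Cmod_ge_0.
      assert (0 <= C * Sd) by (apply Rmult_le_pos; lra).
      assert (0 <= C * x) by (apply Rmult_le_pos; lra).
      assert (0 <= 1 - C * x) by lra.
      assert ((1 - C * x) * (Q M * (1 - C * Sd)) <= (1 - C * x) * Q (M + d)%nat)
        by (apply Rmult_le_compat_l; lra).
      assert (0 <= Q M * (C * x) * (C * Sd)).
      { apply Rmult_le_pos; [apply Rmult_le_pos|]; lra. }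
      lra. }
  assert (Half : forall d, Q M / 2 <= Q (M + d)%nat).
  { intros d. pose proof (Ind d). pose proof (HT d).
    assert (Q M * (C * rsum (fun i => Cmod (v (S M + i)%nat)) d) <= Q M * (1/2))
      by (apply Rmult_le_compat_l; lra).
    lra. }
  assert (QMpos : 0 < Q M).
  { destruct (Req_dec (nsq (psi (S M)) + nsq (psi M)) 0) as [E|E].
    - exfalso. pose proof (nsq_ge0 (psi (S M))). pose proof (nsq_ge0 (psi M)).
      assert (A1 : psi (S M) = RtoC 0) by (apply nsq_zero; lra).
      assert (A0 : psi M = RtoC 0) by (apply nsq_zero; lra).
      apply Hn0. exact (rec_zero v z psi R M A0 A1 n0).
    - pose proof (Qpos t (psi (S M)) (psi M) Ht). pose proof (nsq_ge0 (psi (S M))).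
      pose proof (nsq_ge0 (psi M)). unfold Q. fold c0 in H.
      assert (0 < c0 * (nsq (psi (S M)) + nsq (psi M))) by (apply Rmult_lt_0_compat; lra). lra. }
  destruct (l2_to_0 psi Hl2 (Q M / 8) ltac:(lra)) as [N HN].
  pose proof (Half N). pose proof (Qupper t (psi (S (M + N)%nat)) (psi (M + N)%nat) Ht).
  pose proof (HN (M + N)%nat ltac:(lia)). pose proof (HN (S (M + N)%nat) ltac:(lia)).
  rewrite <- !nsq_Cmod in *. unfold Q in *. lra.
Qed.


Lemma csqrt_ex (w : C) : exists s, Cmult s s = w.
Proof.
  destruct w as [p q].
  set (m := sqrt (p ^ 2 + q ^ 2)).
  assert (Hm2 : m * m = p ^ 2 + q ^ 2) by (unfold m; apply sqrt_sqrt; nra).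
  assert (Hm0 : 0 <= m) by (unfold m; apply sqrt_pos).
  assert (Hmp : Rabs p <= m).
  { destruct (Rle_dec (Rabs p) m) as [|N]; auto. exfalso.
    assert (Rabs p * Rabs p = p * p) by (rewrite <- Rabs_mult; apply Rabs_pos_eq; nra).
    assert (m * m < Rabs p * Rabs p) by (apply Rmult_le_0_lt_compat; lra).
    nra. }
  assert (A1 : 0 <= (m + p) / 2) by (destruct (Rabs_le_between p m) as [X _]; specialize (X Hmp); lra).
  assert (A2 : 0 <= (m - p) / 2) by (destruct (Rabs_le_between p m) as [X _]; specialize (X Hmp); lra).
  set (s1 := sqrt ((m + p) / 2)). set (s2 := sqrt ((m - p) / 2)).
  assert (E1 : s1 * s1 = (m + p) / 2) by (apply sqrt_sqrt; auto).
  assert (E2 : s2 * s2 = (m - p) / 2) by (apply sqrt_sqrt; auto).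
  assert (P1 : 0 <= s1) by apply sqrt_pos. assert (P2 : 0 <= s2) by apply sqrt_pos.
  assert (E3 : (s1 * s2) * (s1 * s2) = (Rabs q / 2) * (Rabs q / 2)).
  { replace ((s1 * s2) * (s1 * s2)) with ((s1 * s1) * (s2 * s2)) by ring.
    rewrite E1, E2. replace (Rabs q / 2 * (Rabs q / 2)) with (Rabs q * Rabs q / 4) by field.
    rewrite <- Rabs_mult. rewrite Rabs_pos_eq by nra. nra. }
  assert (E4 : s1 * s2 = Rabs q / 2).
  { assert (0 <= s1 * s2) by (apply Rmult_le_pos; auto).
    assert (0 <= Rabs q / 2) by (pose proof (Rabs_pos q); lra).
    nra. }
  destruct (Rle_dec 0 q).
  - exists (s1, s2). unfold Cmult; simpl. rewrite Rabs_pos_eq in E4 by lra.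
    f_equal; nra.
  - exists (s1, - s2). unfold Cmult; simpl. rewrite Rabs_left in E4 by lra.
    f_equal; nra.
Qed.

Lemma k_exists z : ~ in_segment z -> exists k, is_k_of z k.
Proof.
  intros Hseg. destruct (csqrt_ex (Cminus (Cmult z z) (RtoC 4))) as [s Hs].
  set (k1 := Cdiv (Cplus z s) (RtoC 2)). set (k2 := Cdiv (Cminus z s) (RtoC 2)).
  assert (H2 : RtoC 2 <> RtoC 0) by (intro E; injection E; lra).
  assert (P : Cmult k1 k2 = RtoC 1).
  { unfold k1, k2. transitivity (Cdiv (Cminus (Cmult z z) (Cmult s s)) (RtoC 4)).
    field; auto. rewrite Hs. field; try (intro E; injection E; lra). }
  assert (k1n : k1 <> RtoC 0) by (intro E; rewrite E in P; rewrite Cmult_0_l in P; injection P; lra).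
  assert (k2n : k2 <> RtoC 0) by (intro E; rewrite E in P; rewrite Cmult_0_r in P; injection P; lra).
  assert (I1 : Cinv k1 = k2).
  { transitivity (Cmult (Cinv k1) (Cmult k1 k2)). rewrite P. field; auto. field; auto. }
  assert (I2 : Cinv k2 = k1).
  { transitivity (Cmult (Cinv k2) (Cmult k1 k2)). rewrite P. field; auto. field; auto. }
  assert (Zs : z = Cplus k1 k2) by (unfold k1, k2; field; auto).
  assert (M : Cmod k1 * Cmod k2 = 1) by (rewrite <- Cmod_mult, P; apply Cmod_1).
  assert (M1 : 0 < Cmod k1) by (pose proof (Cmod_ge_0 k1); destruct (Req_dec (Cmod k1) 0) as [E|]; [apply Cmod_eq_0 in E; contradiction| lra]).
  assert (M2 : 0 < Cmod k2) by (pose proof (Cmod_ge_0 k2); destruct (Req_dec (Cmod k2) 0) as [E|]; [apply Cmod_eq_0 in E; contradiction| lra]).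
  destruct (total_order_T (Cmod k1) 1) as [[L|E]|G].
  - exists k1. split. lra. rewrite I1. exact Zs.
  - exfalso. apply Hseg.
    assert (Zk : z = Cplus k1 (Cinv k1)) by (rewrite I1; exact Zs).
    assert (Hq : fst k1 ^ 2 + snd k1 ^ 2 = 1).
    { pose proof (Cmod2_alt k1) as X. rewrite E in X. unfold Re, Im in X. lra. }
    rewrite Zk. destruct k1 as [c d]. simpl in Hq. unfold Cinv, Cplus, in_segment; simpl.
    rewrite Hq. split. field. 
    assert (c * c <= 1) by nra. split; nra.
  - exists k2. split. split. lra. nra. rewrite I2. rewrite Zs. apply Cplus_comm.
Qed.


Definition pp (a : C) (psi : nat -> C) n := match n with O => Cmult a (psi O) | S j => psi j end.
Definition ee (k : C) n : C := pow_n k n.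
Definition ph (k r : C) n := Cminus (pow_n (Cinv k) n) (Cmult (Cmult r (Cinv k)) (pow_n k n)).
Definition Wr (p chi : nat -> C) n := Cminus (Cmult (p n) (chi (S n))) (Cmult (p (S n)) (chi n)).

Lemma pow_S (k : C) n : @eq C (pow_n k (S n)) (Cmult k (pow_n k n)).
Proof. reflexivity. Qed.

Lemma pow_0 (k : C) : @eq C (pow_n k 0) (RtoC 1).
Proof. reflexivity. Qed.

Lemma pow_one n : @eq C (pow_n (RtoC 1) n) (RtoC 1).
Proof. induction n. reflexivity. rewrite pow_S, IHn. ring. Qed.

Lemma pow_XY (k : C) n : k <> RtoC 0 -> Cmult (pow_n k n) (pow_n (Cinv k) n) = RtoC 1.
Proof. intros H. rewrite <- pow_n_mul. rewrite Cinv_r by auto. apply pow_one. Qed.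

Lemma pow_add (k : C) n m : @eq C (pow_n k (n + m)) (Cmult (pow_n k n) (pow_n k m)).
Proof. exact (pow_n_plus k n m). Qed.

Lemma free_e k z : k <> RtoC 0 -> z = Cplus k (Cinv k) ->
  forall m, ee k (S (S m)) = Cminus (Cmult z (ee k (S m))) (ee k m).
Proof. intros Hk Hz m. unfold ee. rewrite !pow_S, Hz. field. auto. Qed.

Lemma free_ph k r z : k <> RtoC 0 -> z = Cplus k (Cinv k) ->
  forall m, ph k r (S (S m)) = Cminus (Cmult z (ph k r (S m))) (ph k r m).
Proof. intros Hk Hz m. unfold ph. rewrite !pow_S, Hz. field. auto. Qed.

Lemma Rp a v z psi : (forall i, JaV a v psi i = Cmult z (psi i)) ->
  forall m, pp a psi (S (S m)) = Cminus (Cminus (Cmult z (pp a psi (S m))) (pp a psi m)) (Cmult (v m) (pp a psi (S m))).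
Proof.
  intros H m. destruct m as [|j].
  - specialize (H 0%nat). simpl in H |- *. rewrite <- H. ring.
  - specialize (H (S j)). simpl in H |- *. rewrite <- H. ring.
Qed.

Lemma WStep (p chi v : nat -> C) z :
  (forall m, chi (S (S m)) = Cminus (Cmult z (chi (S m))) (chi m)) ->
  (forall m, p (S (S m)) = Cminus (Cminus (Cmult z (p (S m))) (p m)) (Cmult (v m) (p (S m)))) ->
  forall m, Wr p chi (S m) = Cplus (Wr p chi m) (Cmult (Cmult (chi (S m)) (v m)) (p (S m))).
Proof. intros Hc Hp m. unfold Wr. rewrite Hc, Hp. ring. Qed.

Lemma Bsum (p chi v : nat -> C) z :
  (forall m, chi (S (S m)) = Cminus (Cmult z (chi (S m))) (chi m)) ->
  (forall m, p (S (S m)) = Cminus (Cminus (Cmult z (p (S m))) (p m)) (Cmult (v m) (p (S m)))) ->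
  Wr p chi 0 = RtoC 0 ->
  forall n, Wr p chi n = csum (fun i => Cmult (Cmult (chi (S i)) (v i)) (p (S i))) n.
Proof.
  intros Hc Hp H0 n. induction n. exact H0.
  rewrite (WStep p chi v z Hc Hp). rewrite IHn. reflexivity.
Qed.

Lemma Asum (p chi v : nat -> C) z :
  (forall m, chi (S (S m)) = Cminus (Cmult z (chi (S m))) (chi m)) ->
  (forall m, p (S (S m)) = Cminus (Cminus (Cmult z (p (S m))) (p m)) (Cmult (v m) (p (S m)))) ->
  forall n d, Wr p chi (n + d) = Cplus (Wr p chi n)
     (csum (fun i => Cmult (Cmult (chi (S (n + i))) (v (n + i)%nat)) (p (S (n + i)))) d).
Proof.
  intros Hc Hp n d. induction d.
  - rewrite Nat.add_0_r. simpl. ring.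
  - replace (n + S d)%nat with (S (n + d)) by lia.
    rewrite (WStep p chi v z Hc Hp), IHd. simpl csum. ring.
Qed.

Lemma Key (p : nat -> C) k r n : k <> RtoC 0 ->
  Cmult (Cminus k (Cinv k)) (p n) =
  Cminus (Cmult (Wr p (ee k) n) (ph k r n)) (Cmult (Wr p (ph k r) n) (ee k n)).
Proof.
  intros Hk. transitivity (Cmult (Cmult (Cminus k (Cinv k)) (p n)) (Cmult (pow_n k n) (pow_n (Cinv k) n))).
  rewrite pow_XY by auto. ring.
  unfold Wr, ee, ph. rewrite !pow_S. ring.
Qed.

Lemma PowId k r m d : k <> RtoC 0 ->
  Cmult (ph k r (S m)) (pow_n k (S m + d)) = Cmult (pow_n k d) (Cminus (RtoC 1) (Cmult r (pow_n k (2 * m + 1)))).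
Proof.
  intros Hk.
  assert (E : @eq C (pow_n k (2*m+1)) (Cmult k (Cmult (pow_n k m) (pow_n k m)))).
  { replace (2*m+1)%nat with (S (m+m)) by lia. rewrite pow_S, pow_add. reflexivity. }
  rewrite E, pow_add. unfold ph.
  transitivity (Cmult (pow_n k d) (Cminus (Cmult (pow_n k (S m)) (pow_n (Cinv k) (S m))) (Cmult (Cmult r (Cinv k)) (Cmult (pow_n k (S m)) (pow_n k (S m)))))).
  ring. rewrite pow_XY by auto. rewrite !pow_S. field. auto.
Qed.

Lemma csum_scal c f n : Cmult c (csum f n) = csum (fun i => Cmult c (f i)) n.
Proof. induction n; simpl. ring. rewrite <- IHn. ring. Qed.

Lemma Cmod_pow_le1 (k : C) n : Cmod k <= 1 -> Cmod (pow_n k n) <= 1.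
Proof.
  intros H. rewrite Cmod_pow_n, <- (pow1 n). apply pow_incr. split. apply Cmod_ge_0. auto.
Qed.


Lemma rsum_le_lt f g n : (forall i, (i < n)%nat -> f i <= g i) -> rsum f n <= rsum g n.
Proof. induction n; intros H; simpl. lra. assert (f n <= g n) by (apply H; lia).
  assert (rsum f n <= rsum g n) by (apply IHn; intros; apply H; lia). lra. Qed.

Lemma term_bound (x y w q : C) G Mx : Cmod (Cmult x y) <= G -> Cmod q <= Mx -> 0 <= G ->
  Cmod (Cmult x (Cmult (Cmult y w) q)) <= G * Mx * Cmod w.
Proof.
  intros H1 H2 H3.
  replace (Cmult x (Cmult (Cmult y w) q)) with (Cmult (Cmult (Cmult x y) q) w) by ring.
  rewrite !Cmod_mult. rewrite Cmod_mult in H1.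
  pose proof (Cmod_ge_0 w). pose proof (Cmod_ge_0 q).
  apply Rmult_le_compat_r; auto. apply Rmult_le_compat; auto.
  apply Rmult_le_pos; apply Cmod_ge_0.
Qed.

Lemma Cmod_minus_le x y : Cmod (Cminus x y) <= Cmod x + Cmod y.
Proof. unfold Cminus. eapply Rle_trans. apply Cmod_triangle. rewrite Cmod_opp. lra. Qed.

Lemma core a v z psi k G n0 :
  in_l1 v -> in_l2 psi -> psi n0 <> RtoC 0 ->
  (forall i, JaV a v psi i = Cmult z (psi i)) -> is_k_of z k ->
  Cminus (RtoC 1) (Cmult a k) <> RtoC 0 ->
  (forall m, Cmod (Cminus (RtoC 1) (Cmult (Cdiv (Cminus k a) (Cminus (RtoC 1) (Cmult a k))) (pow_n k (2*m+1)))) <= G) ->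
  Cmod (Cminus k (Cinv k)) <= G * l1_norm v.
Proof.
  intros hv Hl2 Hn0 Heq [[Hk0 Hk1] Hz] Hak HG.
  assert (knz : k <> RtoC 0) by (intro E; rewrite E, Cmod_0 in Hk0; lra).
  set (r := Cdiv (Cminus k a) (Cminus (RtoC 1) (Cmult a k))) in *.
  set (p := pp a psi).
  pose proof (Rp a v z psi Heq) as HP. fold p in HP.
  pose proof (free_e k z knz Hz) as He.
  pose proof (free_ph k r z knz Hz) as Hph.
  assert (B0 : Wr p (ph k r) 0 = RtoC 0).
  { unfold Wr, p, pp, ph. rewrite !pow_S, !pow_0. unfold r. field. split; auto. }
  pose proof (Bsum p (ph k r) v z Hph HP B0) as BS.
  pose proof (Asum p (ee k) v z He HP) as AS.
  assert (G0 : 0 <= G) by (eapply Rle_trans; [apply Cmod_ge_0| apply (HG 0%nat)]).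
  assert (Hpos0 : 0 < Cmod (psi n0)).
  { pose proof (Cmod_ge_0 (psi n0)). destruct (Req_dec (Cmod (psi n0)) 0) as [E|E].
    apply Cmod_eq_0 in E. contradiction. lra. }
  destruct (argmax_vanish (fun i => Cmod (psi i)) n0 Hpos0) as [j Hj].
  { destruct (l2_to_0 psi Hl2 (Cmod (psi n0) ^ 2) ltac:(nra)) as [N HN].
    exists N. intros m Hm. specialize (HN m Hm). simpl.
    pose proof (Cmod_ge_0 (psi m)).
    destruct (Rlt_dec (Cmod (psi m)) (Cmod (psi n0))) as [|X]; auto.
    exfalso. assert (Cmod (psi n0) * Cmod (psi n0) <= Cmod (psi m) * Cmod (psi m))
      by (apply Rmult_le_compat; lra). nra. }
  simpl in Hj. set (Mx := Cmod (psi j)) in *.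
  assert (HMx : 0 < Mx) by (pose proof (Hj n0); lra).
  set (n := S j).
  set (c := Cmod (Cminus k (Cinv k))).
  assert (Main : forall d, c * Mx <= Cmod (Wr p (ee k) (n + d)) * Cmod (ph k r n) + G * Mx * l1_norm v).
  { intros d.
    set (Wend := Wr p (ee k) (n + d)).
    set (Sa := csum (fun i => Cmult (Cmult (ee k (S (n + i))) (v (n + i)%nat)) (p (S (n + i)))) d).
    set (Sb := csum (fun i => Cmult (Cmult (ph k r (S i)) (v i)) (p (S i))) n).
    assert (E1 : Cmult (Cminus k (Cinv k)) (psi j) =
       Cminus (Cminus (Cmult Wend (ph k r n)) (Cmult (ph k r n) Sa)) (Cmult (ee k n) Sb)).
    { change (psi j) with (p n). rewrite (Key p k r n knz).
      replace (Wr p (ee k) n) with (Cminus Wend Sa) by (unfold Wend, Sa; rewrite AS; ring).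
      rewrite (BS n). fold Sb. ring. }
    assert (E2 : c * Mx = Cmod (Cmult (Cminus k (Cinv k)) (psi j))) by (rewrite Cmod_mult; reflexivity).
    rewrite E2, E1. unfold Sa, Sb. rewrite !csum_scal.
    eapply Rle_trans. apply Cmod_minus_le.
    eapply Rle_trans. apply Rplus_le_compat_r. apply Cmod_minus_le.
    rewrite Cmod_mult.
    assert (T1 : Cmod (csum (fun i => Cmult (ph k r n) (Cmult (Cmult (ee k (S (n + i))) (v (n + i)%nat)) (p (S (n + i))))) d)
       <= rsum (fun i => G * Mx * Cmod (v (n + i)%nat)) d).
    { eapply Rle_trans. apply csum_triangle. apply rsum_le. intros i.
      apply term_bound; auto.
      - unfold n, ee. replace (S (S j + i)) with (S j + S i)%nat by lia.
        rewrite PowId by auto. rewrite Cmod_mult.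
        pose proof (Cmod_pow_le1 k (S i) ltac:(lra)). pose proof (HG j). fold r in H0.
        pose proof (Cmod_ge_0 (pow_n k (S i))). pose proof (Cmod_ge_0 (Cminus (RtoC 1) (Cmult r (pow_n k (2 * j + 1))))).
        replace G with (1 * G) by ring. apply Rmult_le_compat; auto.
      - apply Hj. }
    assert (T2 : Cmod (csum (fun i => Cmult (ee k n) (Cmult (Cmult (ph k r (S i)) (v i)) (p (S i)))) n)
       <= rsum (fun i => G * Mx * Cmod (v i)) n).
    { eapply Rle_trans. apply csum_triangle. apply rsum_le_lt. intros i Hi.
      apply term_bound; auto.
      - unfold ee. replace n with (S i + (n - S i))%nat by lia.
        rewrite Cmult_comm. rewrite PowId by auto. rewrite Cmod_mult.
        pose proof (Cmod_pow_le1 k (n - S i) ltac:(lra)). pose proof (HG i). fold r in H0.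
        pose proof (Cmod_ge_0 (pow_n k (n - S i))). pose proof (Cmod_ge_0 (Cminus (RtoC 1) (Cmult r (pow_n k (2 * i + 1))))).
        replace G with (1 * G) by ring. apply Rmult_le_compat; auto.
      - apply Hj. }
    assert (T3 : rsum (fun i => G * Mx * Cmod (v (n + i)%nat)) d + rsum (fun i => G * Mx * Cmod (v i)) n
                 <= G * Mx * l1_norm v).
    { rewrite !rsum_scal. rewrite <- Rmult_plus_distr_l. apply Rmult_le_compat_l.
      apply Rmult_le_pos; lra. rewrite Rplus_comm, rsum_split. apply rsum_le_series.
      intros; apply Cmod_ge_0. exact hv. }
    rewrite (Rmult_comm (Cmod Wend)). lra. }
  destruct (Rle_dec (c * Mx) (G * Mx * l1_norm v)) as [L|L].
  - apply Rmult_le_reg_r with Mx; auto. lra.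
  - exfalso. set (del := c * Mx - G * Mx * l1_norm v).
    assert (Hdel : 0 < del) by (unfold del; lra).
    set (ph0 := Cmod (ph k r n)).
    assert (Hph0 : 0 <= ph0) by apply Cmod_ge_0.
    set (eps := del / (2 * (ph0 + 1))).
    assert (Heps : 0 < eps) by (unfold eps; apply Rdiv_lt_0_compat; lra).
    destruct (l2_to_0 psi Hl2 (eps ^ 2) ltac:(nra)) as [N HN].
    assert (Sm : forall m, (N <= m)%nat -> Cmod (psi m) < eps).
    { intros m Hm. specialize (HN m Hm). pose proof (Cmod_ge_0 (psi m)).
      destruct (Rlt_dec (Cmod (psi m)) eps) as [|X]; auto. exfalso.
      assert (eps * eps <= Cmod (psi m) * Cmod (psi m)) by (apply Rmult_le_compat; lra). nra. }
    pose proof (Main N) as MN.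
    assert (W : Cmod (Wr p (ee k) (n + N)) <= 2 * eps).
    { unfold Wr, ee. eapply Rle_trans. apply Cmod_minus_le. rewrite !Cmod_mult.
      replace (n + N)%nat with (S (j + N)) by (unfold n; lia).
      change (p (S (j + N))) with (psi (j + N)%nat). change (p (S (S (j + N)))) with (psi (S (j + N))).
      pose proof (Sm (j + N)%nat ltac:(lia)). pose proof (Sm (S (j + N)) ltac:(lia)).
      pose proof (Cmod_pow_le1 k (S (S (j + N))) ltac:(lra)). pose proof (Cmod_pow_le1 k (S (j + N)) ltac:(lra)).
      pose proof (Cmod_ge_0 (psi (j + N)%nat)). pose proof (Cmod_ge_0 (psi (S (j + N)))).
      pose proof (Cmod_ge_0 (pow_n k (S (S (j + N))))). pose proof (Cmod_ge_0 (pow_n k (S (j + N)))).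
      assert (Cmod (psi (j + N)%nat) * Cmod (pow_n k (S (S (j + N)))) <= eps * 1) by (apply Rmult_le_compat; lra).
      assert (Cmod (psi (S (j + N))) * Cmod (pow_n k (S (j + N))) <= eps * 1) by (apply Rmult_le_compat; lra).
      lra. }
    fold ph0 in MN.
    assert (Cmod (Wr p (ee k) (n + N)) * ph0 <= 2 * eps * ph0) by (apply Rmult_le_compat_r; auto).
    assert (2 * eps * ph0 < del).
    { unfold eps. replace (2 * (del / (2 * (ph0 + 1))) * ph0) with (del * (ph0 / (ph0 + 1))) by (field; lra).
      assert (0 < / (ph0 + 1)) by (apply Rinv_0_lt_compat; lra).
      assert (ph0 / (ph0 + 1) < 1) by (replace (ph0 / (ph0 + 1)) with (1 - / (ph0 + 1)) by (field; intro; lra); lra).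
      assert (del * (ph0 / (ph0 + 1)) < del * 1) by (apply Rmult_lt_compat_l; lra). lra. }
    unfold del in *. lra.
Qed.


Theorem theorem3p1 (a : C) (v : nat -> C) (hv : in_l1 v) (z : C) :
  is_eigenvalue a v z ->
  z = RtoC 2 \/ z = RtoC (-2) \/
  (~ in_segment z /\ bound_holds a z (l1_norm v)).
Proof.
  intros Heig.
  destruct (classic (in_segment z)) as [Hs|Hs].
  - destruct Hs as [H0 [H1 H2]].
    destruct (Req_dec (fst z) 2) as [E|E].
    { left. destruct z; simpl in *; subst; reflexivity. }
    destruct (Req_dec (fst z) (-2)) as [E'|E'].
    { right; left. destruct z; simpl in *; subst; reflexivity. }
    exfalso. apply (interior_no_eig a v z hv H0 ltac:(lra) Heig).
  - right; right. split; auto.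
    destruct Heig as [psi [Hl2 [[n0 Hn0] Heq]]].
    unfold bound_holds, g.
    destruct (excluded_middle_informative _) as [Ex|NE]; [exact I|].
    destruct (k_exists z Hs) as [k Hk].
    assert (Hak : Cminus (RtoC 1) (Cmult a k) <> RtoC 0) by (intro E; apply NE; exists k; auto).
    match goal with |- context [Lub_Rbar ?F] => set (E := F) end.
    destruct (Lub_Rbar_correct E) as [Hub _].
    assert (Mem : forall m, E (Cmod (Cminus (RtoC 1) (Cmult (Cdiv (Cminus k a) (Cminus (RtoC 1) (Cmult a k))) (pow_n k (2 * m + 1)))))).
    { intros m. exists k, m. split; auto. }
    destruct (Lub_Rbar E) as [G| |].
    + assert (HG : forall m, Cmod (Cminus (RtoC 1) (Cmult (Cdiv (Cminus k a) (Cminus (RtoC 1) (Cmult a k))) (pow_n k (2 * m + 1)))) <= G).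
      { intros m. exact (Hub _ (Mem m)). }
      pose proof (core a v z psi k G n0 hv Hl2 Hn0 Heq Hk Hak HG) as C.
      destruct Hk as [[Hk0 Hk1] Hz].
      assert (knz : k <> RtoC 0) by (intro X; rewrite X, Cmod_0 in Hk0; lra).
      replace (Cminus (Cmult z z) (RtoC 4)) with (Cmult (Cminus k (Cinv k)) (Cminus k (Cinv k)))
        by (rewrite Hz; field; auto).
      rewrite Cmod_mult, sqrt_square by apply Cmod_ge_0. exact C.
    + exact I.
    + exact (Hub _ (Mem 0%nat)).
Qed.
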